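(* Let $W\in\mathcal W_0$, $w=\int_{[0,1]^2}W\,dxdy$ and $\ell(W)=W(1-W)$, and suppose $\int_{[0,1]^2}\ell(W)(x,y)\,dxdy\ne0$. For $\delta>0$ let $\xi=\xi(\delta)>0$ be the unique solution of $\int_{[0,1]^2}\frac{\xi W(x,y)}{1-W(x,y)+\xi W(x,y)}\,dxdy=w+\delta$, and set $W^\ast_\delta=\frac{W\xi}{1-W+W\xi}$. Then for sufficiently small $\delta>0$, $$W^\ast_\delta=W+\delta\,\frac{\ell(W)}{\int_{[0,1]^2}\ell(W)(x,y)\,dxdy}+O(\delta^2).$$
   Context: $\mathcal W_0$ is the set of symmetric measurable $W:[0,1]^2\to[0,1]$. $O(\delta^2)$ denotes a function on $[0,1]^2$ bounded in absolute value by $C\delta^2$ with $C$ independent of $\delta$ and $(x,y)$. *)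

(* Defs.v *)
From HB Require Import structures.
From mathcomp Require Import all_boot all_order all_algebra.
From mathcomp Require Import all_classical all_reals all_analysis.
Set Implicit Arguments. Unset Strict Implicit. Unset Printing Implicit Defensive.
Import Order.TTheory GRing.Theory Num.Theory.
Local Open Scope classical_set_scope.
Local Open Scope ring_scope.

Section defs.
Variable R : realType.

Definition usq : set (R * R) := `[0%R, 1%R] `*` `[0%R, 1%R].

Definition leb2 := (@lebesgue_measure R \x @lebesgue_measure R)%E.

Definition int2 (f : R * R -> R) : R := Rintegral leb2 usq f.

(* W is in W_0: symmetric measurable [0,1]^2 -> [0,1]
   (only the values on the unit square matter) *)
Definition in_W0 (W : R * R -> R) : Prop :=
  measurable_fun usq W /\
  (forall x y, x \in `[0%R, 1%R] -> y \in `[0%R, 1%R] ->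
     0 <= W (x, y) <= 1 /\ W (x, y) = W (y, x)).

Definition ell (W : R * R -> R) : R * R -> R := fun p => W p * (1 - W p).

Definition Wstar (W : R * R -> R) (xi : R) : R * R -> R :=
  fun p => xi * W p / (1 - W p + xi * W p).

End defs.

(* Main.v *)
Require Import Defs.
From HB Require Import structures.
From mathcomp Require Import all_boot all_order all_algebra.
From mathcomp Require Import all_classical all_reals all_analysis.
From mathcomp Require Import ring lra.
Import Order.TTheory GRing.Theory Num.Theory.
Import numFieldNormedType.Exports.
Set Implicit Arguments. Unset Strict Implicit.
Local Open Scope classical_set_scope.
Local Open Scope ring_scope.
Section Alg.
Variable R : realType.
Implicit Types w xi a b : R.
Definition ws xi w := xi * w / (1 - w + xi * w).

Lemma den_gt0 xi w : 0 < xi -> 0 <= w <= 1 -> 0 < 1 - w + xi * w.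
Proof. move=> h /andP[h1 h2]. nra. Qed.

Lemma ws_diff xi w : 0 < xi -> 0 <= w <= 1 ->
  ws xi w - w = w * (1 - w) * (xi - 1) / (1 - w + xi * w).
Proof.
move=> h hw; have := den_gt0 h hw => hD.
rewrite /ws; field; lra.
Qed.

Lemma ws_bound xi w : 0 < xi -> 0 <= w <= 1 -> 0 <= ws xi w <= 1.
Proof.
move=> h hw; have hD := den_gt0 h hw; move: (hw) => /andP[h1 h2].
rewrite /ws; apply/andP; split.
  by apply: divr_ge0; nra.
by rewrite ler_pdivrMr //; nra.
Qed.
Lemma ws1 w : ws 1 w = w.
Proof. rewrite /ws !mul1r subrK divr1. by []. Qed.

Lemma ws_le xi w : 0 < xi <= 1 -> 0 <= w <= 1 -> ws xi w - w <= 0.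
Proof.
move=> /andP[h h'] hw; rewrite ws_diff //; have hD := den_gt0 h hw.
move: hw => /andP[h1 h2].
rewrite pmulr_lle0 ?invr_gt0 //; have : 0 <= w * (1 - w) by nra. nra.
Qed.

Lemma ws_ge xi w : 1 <= xi -> 0 <= w <= 1 ->
  w * (1 - w) * (xi - 1) / xi <= ws xi w - w.
Proof.
move=> h hw; have h0 : 0 < xi by lra.
rewrite ws_diff //; have hD := den_gt0 h0 hw.
move: hw => /andP[h1 h2].
apply: ler_wpM2l; first by apply: mulr_ge0; [apply: mulr_ge0|]; lra.
rewrite lef_pV2 ?posrE //; nra.
Qed.

Lemma ws_lin xi w : 1 <= xi -> 0 <= w <= 1 ->
  `| ws xi w - w - (xi - 1) * (w * (1 - w)) | <= (xi - 1) ^+ 2.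
Proof.
move=> h hw; have h0 : 0 < xi by lra.
have hD := den_gt0 h0 hw.
have -> : ws xi w - w - (xi - 1) * (w * (1 - w)) =
   - ((xi - 1) ^+ 2 * (w * (1 - w) * w)) / (1 - w + xi * w).
  rewrite ws_diff //; field; lra.
move: hw => /andP[h1 h2].
have he : 0 <= w * (1 - w) <= 1 by apply/andP; split; nra.
have hew : 0 <= w * (1 - w) * w <= 1 by apply/andP; split; nra.
rewrite normrM normrN gtr0_norm ?invr_gt0 // ger0_norm; last by apply: mulr_ge0; [exact: sqr_ge0|lra].
rewrite ler_pdivrMr //.
have : (xi - 1) ^+ 2 * (w * (1 - w) * w) <= (xi - 1) ^+ 2.
  by rewrite ler_piMr ?sqr_ge0 //; lra.
have : (xi - 1) ^+ 2 <= (xi - 1) ^+ 2 * (1 - w + xi * w).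
  by rewrite ler_peMr ?sqr_ge0 //; nra.
lra.
Qed.

Lemma ws_lip a b w : 1 <= a -> 1 <= b -> 0 <= w <= 1 ->
  `| ws a w - ws b w | <= `| a - b |.
Proof.
move=> ha hb hw; have ha0 : 0 < a by lra. have hb0 : 0 < b by lra.
have hDa := den_gt0 ha0 hw; have hDb := den_gt0 hb0 hw.
have -> : ws a w - ws b w = (a - b) * (w * (1 - w) / ((1 - w + a * w) * (1 - w + b * w))).
  rewrite /ws; field; lra.
rewrite normrM ler_piMr //.
move: hw => /andP[h1 h2].
rewrite ger0_norm; last by apply: divr_ge0; nra.
have e1 : 1 <= 1 - w + a * w by nra.
have e2 : 1 <= 1 - w + b * w by nra.
have e3 : 1 <= (1 - w + a * w) * (1 - w + b * w) by rewrite mulr_ege1.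
rewrite ler_pdivrMr; last lra.
nra.
Qed.

Lemma ws2 w : 0 <= w <= 1 -> w * (1 - w) / 2 <= ws 2 w - w.
Proof.
move=> hw; have := ws_ge (ler1n R 2) hw.
by rewrite (_ : 2 - 1 = 1 :> R) ?mulr1 //; lra.
Qed.
End Alg.

Section Int.
Variable R : realType.
Local Notation usq := (@usq R).
Local Notation mu := (@leb2 R).

Lemma musq : measurable usq.
Proof. apply: measurableX; exact: measurable_itv. Qed.

Lemma leb2_usq : mu usq = 1%:E.
Proof. rewrite /leb2 /Defs.usq product_measure1E; try exact: measurable_itv.
have L : lebesgue_measure (`[0%R, 1%R] : set R) = 1%:E.
  by rewrite lebesgue_measure_itv /= lte_fin ltr01 -EFinB subr0.
by rewrite [X in (X * _)%E]L [X in (_ * X)%E]L mule1.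
Qed.

Definition good (f : R * R -> R) :=
  measurable_fun usq f /\ exists M, forall p, usq p -> `|f p| <= M.

Lemma good_integrable f : good f -> mu.-integrable usq (EFin \o f).
Proof.
move=> [mf [M hM]]; apply: measurable_bounded_integrable => //.
- exact: musq.
- apply: (@le_lt_trans _ _ 1%:E); last exact: ltry.
  by have := leb2_usq; rewrite /leb2 => <-.
- exists M; split; first exact: num_real.
  move=> N MN p up; apply: le_trans (hM p up) _; exact: ltW.
Qed.

Lemma good_cst c : good (fun _ => c).
Proof. split; first exact: measurable_cst. by exists `|c|. Qed.

Lemma good_add f g : good f -> good g -> good (fun p => f p + g p).
Proof.
move=> [mf [M hM]] [mg [N hN]]; split; first exact: measurable_realfun.measurable_funD.
exists (M + N) => p up; apply: le_trans (ler_normD _ _) _; by apply: lerD; [apply: hM|apply: hN].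
Qed.

Lemma good_opp f : good f -> good (fun p => - f p).
Proof.
move=> [mf [M hM]]; split; first exact: measurable_realfun.measurable_funN.
by exists M => p up; rewrite normrN; exact: hM.
Qed.

Lemma good_mul f g : good f -> good g -> good (fun p => f p * g p).
Proof.
move=> [mf [M hM]] [mg [N hN]]; split; first exact: measurable_realfun.measurable_funM.
exists (M * N) => p up; rewrite normrM; apply: ler_pM => //; by [apply: hM|apply: hN].
Qed.

Lemma int2_le f g : good f -> good g -> (forall p, usq p -> f p <= g p) ->
  int2 f <= int2 g.
Proof.
move=> gf gg h; rewrite /int2 /leb2; apply: le_Rintegral => //.
- exact: musq.
- exact: good_integrable gf.
- exact: good_integrable gg.
Qed.

Lemma int2_B f g : good f -> good g -> int2 (fun p => f p - g p) = int2 f - int2 g.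
Proof. move=> gf gg; rewrite /int2 /leb2; apply: RintegralB => //.
- exact: musq.
- exact: good_integrable gf.
- exact: good_integrable gg.
Qed.

Lemma int2_Z f c : good f -> int2 (fun p => c * f p) = c * int2 f.
Proof. move=> gf; rewrite /int2 /leb2; apply: RintegralZl => //.
- exact: musq.
- exact: good_integrable gf.
Qed.

Lemma int2_cst c : int2 (fun _ : R * R => c) = c.
Proof. rewrite /int2 /leb2 Rintegral_cst; last exact: musq.
have E := leb2_usq; rewrite -[RHS]mulr1; congr (_ * _).
by rewrite -[1]/(fine (1%:E : \bar R)); congr fine; exact: E.
Qed.

End Int.

Section Main.
Variable R : realType.
Variable W : R * R -> R.
Hypothesis HW : in_W0 W.
Local Notation usq := (@usq R).

Lemma Wb p : usq p -> 0 <= W p <= 1.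
Proof. case: p => x y [hx hy]; exact: (HW.2 x y hx hy).1. Qed.

Lemma gW : good W.
Proof. split; first exact: HW.1. exists 1 => p up; have := Wb up => /andP[h1 h2].
by rewrite ger0_norm. Qed.

Lemma gell : good (ell W).
Proof. exact: (good_mul gW (good_add (good_cst 1) (good_opp gW))). Qed.

Lemma gWs xi : 0 < xi -> good (Wstar W xi).
Proof.
move=> xi0; split; last first.
  exists 1 => p up; have := ws_bound xi0 (Wb up) => /andP[h1 h2].
  by rewrite /Wstar ger0_norm.
have gD : good (fun p => 1 + - W p + xi * W p).
  exact: (good_add (good_add (good_cst 1) (good_opp gW)) (good_mul (good_cst xi) gW)).
have mI : measurable_fun usq (GRing.inv \o (fun p => 1 + - W p + xi * W p)).
  apply: (@measurable_comp _ _ _ _ _ _ (`]0%R, +oo[%classic : set R)).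
  - exact: measurable_itv.
  - move=> _ [p up <-] /=; rewrite in_itv /= andbT.
    exact: (den_gt0 xi0 (Wb up)).
  - apply: measurable_realfun.open_continuous_measurable_fun; first exact: interval_open.
    move=> x; rewrite inE /= in_itv /= andbT => x0.
    by apply: inv_continuous; rewrite gt_eqF.
  - exact: gD.1.
exact: (measurable_realfun.measurable_funM (good_mul (good_cst xi) gW).1 mI).
Qed.

Lemma ell_b p : usq p -> 0 <= ell W p <= 1.
Proof. move=> up; have := Wb up => /andP[h1 h2]; rewrite /ell; apply/andP; split; nra. Qed.

Lemma int_ell_ge0 : 0 <= int2 (ell W).
Proof.
rewrite -(int2_cst (0:R)); apply: int2_le; [exact: good_cst|exact: gell|].
by move=> p up; have /andP[] := ell_b up.
Qed.

Lemma gD (f g : R * R -> R) : good f -> good g -> good (fun p => f p - g p).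
Proof. by move=> gf gg; exact: good_add gf (good_opp gg). Qed.

Lemma gZ (f : R * R -> R) c : good f -> good (fun p => c * f p).
Proof. by move=> gf; exact: good_mul (good_cst c) gf. Qed.

Lemma F1 : int2 (Wstar W 1) = int2 W.
Proof. by congr int2; apply: funext => p; exact: ws1. Qed.

Lemma Fdiff xi : 0 < xi -> int2 (Wstar W xi) - int2 W = int2 (fun p => Wstar W xi p - W p).
Proof. by move=> h; rewrite int2_B //; [exact: gWs|exact: gW]. Qed.

Lemma Fle xi : 0 < xi <= 1 -> int2 (Wstar W xi) - int2 W <= 0.
Proof.
move=> /andP[h h']; rewrite Fdiff // -(int2_cst (0:R)); apply: int2_le.
- by apply: gD; [exact: gWs|exact: gW].
- exact: good_cst.
- move=> p up /=; apply: (ws_le _ (Wb up)); by rewrite h h'.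
Qed.

Lemma Fge xi : 1 <= xi -> (xi - 1) / xi * int2 (ell W) <= int2 (Wstar W xi) - int2 W.
Proof.
move=> h; have h0 : 0 < xi by lra.
rewrite Fdiff // -int2_Z; last exact: gell.
apply: int2_le.
- exact: gZ gell.
- by apply: gD; [exact: gWs|exact: gW].
- move=> p up; apply: le_trans (ws_ge h (Wb up)); rewrite /ell.
  rewrite /= le_eqVlt; apply/orP; left; apply/eqP; field; lra.
Qed.

Lemma F2 : int2 (ell W) / 2 <= int2 (Wstar W 2) - int2 W.
Proof.
rewrite Fdiff // mulrC -int2_Z; last exact: gell.
apply: int2_le.
- exact: gZ gell.
- by apply: gD; [exact: gWs|exact: gW].
- move=> p up; apply: le_trans (ws2 (Wb up)); rewrite /ell.
  rewrite /= le_eqVlt; apply/orP; left; apply/eqP; by field.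
Qed.

Lemma int2_bound (f : R * R -> R) c : good f -> (forall p, usq p -> `|f p| <= c) -> `|int2 f| <= c.
Proof.
move=> gf h; rewrite ler_norml; apply/andP; split.
- rewrite -(int2_cst (- c)); apply: int2_le; [exact: good_cst|exact: gf|].
  by move=> p up; have := h p up; rewrite ler_norml => /andP[].
- rewrite -[X in _ <= X](int2_cst c); apply: int2_le; [exact: gf|exact: good_cst|].
  by move=> p up; have := h p up; rewrite ler_norml => /andP[].
Qed.

Lemma Flip a b : 1 <= a -> 1 <= b -> `|int2 (Wstar W a) - int2 (Wstar W b)| <= `|a - b|.
Proof.
move=> ha hb; have ha0 : 0 < a by lra. have hb0 : 0 < b by lra.
rewrite -int2_B; [|exact: gWs|exact: gWs].
apply: int2_bound; first by apply: gD; apply: gWs.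
move=> p up; exact: ws_lip ha hb (Wb up).
Qed.

Lemma Flin xi : 1 <= xi ->
  `|(int2 (Wstar W xi) - int2 W) - (xi - 1) * int2 (ell W)| <= (xi - 1) ^+ 2.
Proof.
move=> h; have h0 : 0 < xi by lra.
rewrite Fdiff // -int2_Z; last exact: gell.
rewrite -int2_B; last (exact: gZ gell); last by apply: gD; [exact: gWs|exact: gW].
apply: int2_bound.
  apply: gD; last exact: gZ gell.
  by apply: gD; [exact: gWs|exact: gW].
move=> p up; exact: ws_lin h (Wb up).
Qed.
End Main.
Local Open Scope ring_scope.
Definition cl (R : realType) (a : R) := if a < 1 then 1 else a.
Lemma cl_ge1 (R : realType) (a : R) : 1 <= cl a.
Proof. rewrite /cl; case: ifP => h //; by rewrite leNgt h. Qed.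
Lemma cl_lip (R : realType) (a b : R) : `|cl a - cl b| <= `|a - b|.
Proof.
rewrite /cl; case: ifP => ha; case: ifP => hb.
- by rewrite subrr normr0.
- move: hb => /negbT; rewrite -leNgt => hb. rewrite distrC [X in _ <= X]distrC !ger0_norm; lra.
- move: ha => /negbT; rewrite -leNgt => ha. rewrite !ger0_norm; lra.
- by [].
Qed.

Theorem lemma5p1 (R : realType) (W : R * R -> R) :
  in_W0 W ->
  int2 (ell W) != 0 ->
  exists delta0 : R, exists C : R, 0 < delta0 /\
    forall delta : R, 0 < delta < delta0 ->
      (exists xi : R, 0 < xi /\ int2 (Wstar W xi) = int2 W + delta) /\
      (forall xi : R, 0 < xi -> int2 (Wstar W xi) = int2 W + delta ->
         forall x y : R, x \in `[0, 1] -> y \in `[0, 1] ->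
           `| Wstar W xi (x, y) - W (x, y)
              - delta * (ell W (x, y) / int2 (ell W)) | <= C * delta ^+ 2).
Proof.
move=> HW HL.
set L := int2 (ell W).
have L0 : 0 < L by rewrite lt0r HL int_ell_ge0.
exists (L / 2), (4 / L ^+ 2 + 4 / L ^+ 3); split; first by apply: divr_gt0.
move=> delta /andP[d0 dL]; split.
- pose g x := int2 (Wstar W (cl x)).
  have gc : continuous g.
    move=> x; apply/cvgrPdist_lt => e e0.
    exists e => //= y /= hxy.
    apply: le_lt_trans (Flip HW (cl_ge1 x) (cl_ge1 y)) _.
    exact: le_lt_trans (cl_lip x y) hxy.
  have g1 : g 1 = int2 W by rewrite /g /cl ltxx F1.
  have g2 : int2 W + delta <= g 2.
    have := F2 HW; rewrite /g /cl ltNge ler1n /= -/L; lra.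
  have hv : Num.min (g 1) (g 2) <= int2 W + delta <= Num.max (g 1) (g 2).
    have h1 : g 1 <= int2 W + delta by rewrite g1; lra.
    apply/andP; split; first by rewrite ge_min h1.
    by rewrite le_max g2 orbT.
  have [c c12 gcv] := @IVT R g 1 2 (int2 W + delta) (ler1n R 2) (continuous_subspaceT gc) hv.
  move: c12; rewrite in_itv /= => /andP[c1 c2].
  exists c; split; first lra.
  by rewrite -gcv /g /cl ltNge c1.
- move=> xi xi0 Fxi x y hx hy.
  have D : int2 (Wstar W xi) - int2 W = delta by rewrite Fxi; lra.
  have xi1 : 1 <= xi.
    case: (leP 1 xi) => // h; have hxi : 0 < xi <= 1 by rewrite xi0 (ltW h).
    have := Fle HW hxi; lra.
  have up : usq (x, y) by split.
  set t := xi - 1.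
  have t0 : 0 <= t by rewrite /t; lra.
  have tb : t <= 2 * delta / L.
    have h1 := Fge HW xi1; rewrite D -/L mulrAC ler_pdivrMr in h1; last lra.
    rewrite ler_pdivlMr //; rewrite -/t in h1.
    have ext : xi = t + 1 by rewrite /t; ring.
    have : t * delta <= t * (L / 2) by apply: ler_wpM2l => //; lra.
    rewrite ext in h1; lra.
  have lin := Flin HW xi1; rewrite D -/L -/t in lin.
  have pw := ws_lin xi1 (Wb HW up); rewrite -/t in pw.
  have hb := ell_b HW up.
  set A := ws xi (W (x, y)) - W (x, y) - t * (W (x, y) * (1 - W (x, y))) in pw.
  set B := t * L - delta.
  have -> : Wstar W xi (x, y) - W (x, y) - delta * (ell W (x, y) / L) =
    A + ell W (x, y) / L * B.
    have hD := den_gt0 xi0 (Wb HW up).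
    rewrite /A /B /t /Wstar /ws /ell; field; lra.
  have hB : `|B| <= t ^+ 2 by rewrite /B distrC.
  set s := t ^+ 2 in pw hB *.
  have sS : s <= (2 * delta / L) ^+ 2 by rewrite /s ler_pXn2r // ?nnegrE; lra.
  have e1 : `|ell W (x, y) / L| <= 1 / L.
    have [he0 he1] := andP hb.
    rewrite normrM (ger0_norm he0) gtr0_norm ?invr_gt0 // mul1r.
    by apply: ler_piMl => //; rewrite invr_ge0 ltW.
  have eB : `|ell W (x, y) / L * B| <= 1 / L * s.
    by rewrite normrM; apply: ler_pM.
  have sL : 1 / L * s <= 1 / L * (2 * delta / L) ^+ 2.
    by rewrite ler_pM2l // divr_gt0.
  have -> : (4 / L ^+ 2 + 4 / L ^+ 3) * delta ^+ 2 =
     (2 * delta / L) ^+ 2 + 1 / L * (2 * delta / L) ^+ 2.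
    field; lra.
  apply: le_trans (ler_normD _ _) _.
  lra.
Qed.
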